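(* Let $A\subseteq\mathbb{R}$ be a closed set with smallest element $\theta_*$, and let $c:A\to\mathbb{R}$ be nondecreasing and left-continuous with $c(\theta_* )=0$ and $c(x)>0$ for all $x\in A$ with $x>\theta_*$; if $A$ is unbounded, assume further that $\inf\{c(x)/x : x\in A,\ x\ge y\}\uparrow\infty$ as $y\uparrow\infty$. Define $\phi(y)=\sup_{x\in A}\{yx-c(x)\}$ for $y\ge 0$, and let $\psi(y)$ be the smallest element of $A$ attaining this supremum. Then: (i) $\psi$ is right-continuous at $0$; (ii) $\phi_*\equiv-\inf\{\phi(y):y\ge0\}<\infty$ if and only if $A$ has a nonnegative element; (iii) if $A$ is unbounded, then $\psi(y)\to\infty$ and $\phi(y)\to\infty$ as $y\to\infty$; (iv) if $A$ is bounded, then $\psi(y)\to\theta^*$ as $y\to\infty$, where $\theta^*\equiv\sup A$.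
   Context: Under the stated assumptions on $A$ and $c$, for every $y\ge0$ the supremum defining $\phi(y)$ is finite and the set of maximizers in $A$ is nonempty and has a smallest element, so $\psi(y)=\inf\arg\max_{x\in A}\{yx-c(x)\}$ is well defined. It is also known that $\psi$ is nondecreasing and left-continuous on $[0,\infty)$ and $\phi(y)=\int_0^y\psi(u)\,du$ for $y\ge 0$. *)

(* Defs.v *)
From HB Require Import structures.
From mathcomp Require Import all_boot all_order all_algebra.
From mathcomp Require Import all_classical all_reals all_analysis.
Set Implicit Arguments. Unset Strict Implicit. Unset Printing Implicit Defensive.
Import Order.TTheory GRing.Theory Num.Theory.
Import numFieldNormedType.Exports.
Local Open Scope classical_set_scope.
Local Open Scope ring_scope.

Definition phi (R : realType) (A : set R) (c : R -> R) (y : R) : R :=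
  sup [set y * x - c x | x in A].

Definition psi (R : realType) (A : set R) (c : R -> R) (y : R) : R :=
  inf [set x | A x /\ y * x - c x = phi A c y].

Definition phi_star (R : realType) (A : set R) (c : R -> R) : \bar R :=
  (- ereal_inf [set (phi A c y)%:E | y in [set y : R | (0 <= y)%R]])%E.

(* Main.v *)
Require Import Defs.
From HB Require Import structures.
From mathcomp Require Import all_boot all_order all_algebra.
From mathcomp Require Import all_classical all_reals all_analysis.
From mathcomp Require Import ring lra.
Import Order.TTheory GRing.Theory Num.Theory.
Import numFieldNormedType.Exports.
Local Open Scope classical_set_scope.
Local Open Scope ring_scope.
Set Implicit Arguments. Unset Strict Implicit.
Section S.
Context (R : realType).

Lemma closed_sup_in (A : set R) : closed A -> A !=set0 -> has_ubound A -> A (sup A).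
Proof.
move=> cA A0 ubA; apply: cA => B /nbhs_ballP [e e0 sB].
have hs : has_sup A by split.
have [x Ax lx] := sup_adherent e0 hs.
exists x; split => //; apply: sB.
rewrite -ball_normE /= ger0_norm ?subr_ge0; last exact: sup_upper_bound.
by rewrite ltrBlDr -ltrBlDl.
Qed.

Lemma closed_inf_in (A : set R) : closed A -> A !=set0 -> has_lbound A -> A (inf A).
Proof.
move=> cA A0 lbA; apply: cA => B /nbhs_ballP [e e0 sB].
have [x Ax lx] : exists2 x, A x & x < inf A + e.
  apply: contrapT => N.
  have : inf A + e <= inf A.
    apply: lb_le_inf => // x Ax; rewrite leNgt; apply/negP => h; apply: N; by exists x.
  by rewrite gerDl leNgt e0.
exists x; split => //; apply: sB.
rewrite -ball_normE /=; have := ge_inf lbA Ax => h.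
rewrite ler0_norm ?subr_le0 // opprB ltrBlDr addrC //.
Qed.

Lemma c_ge0 (A : set R) (c : R -> R) th :
  A th -> (forall x, A x -> th <= x) ->
  (forall x y, A x -> A y -> x <= y -> c x <= c y) -> c th = 0 ->
  forall x, A x -> 0 <= c x.
Proof. by move=> Ath thm mon c0 x Ax; rewrite -c0; apply: mon => //; apply: thm. Qed.

Lemma exists_max (A : set R) (c : R -> R) th (y B : R) :
  closed A -> A th -> (forall x, A x -> th <= x) ->
  (forall x y, A x -> A y -> x <= y -> c x <= c y) ->
  (forall x, A x -> c z @[z --> within A (x^'-)] --> c x) ->
  c th = 0 -> 0 <= y ->
  (forall x, A x -> B < x -> y * x - c x < y * th) ->
  exists2 p, A p & forall x, A x -> y * x - c x <= y * p - c p.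
Proof.
move=> cA Ath thm mon lc c0 y0 HB.
have cpos := @c_ge0 A c th Ath thm mon c0.
pose f x := y * x - c x.
pose B' := Num.max B th.
pose K := A `&` `[th, B'].
have Kth : K th.
  by split => //=; rewrite in_itv /= lexx le_max lexx orbT.
have cK : compact K.
  apply: (@subclosed_compact _ _ `[th, B']); first exact: closedI cA (@itv_closed _ _ _ _).
    exact: segment_compact.
  by move=> x [].
pose S := [set f x | x in K].
have hS : has_sup S.
  split; first by exists (f th), th.
  exists (y * B') => _ [x [Ax] xi <-].
  move: xi; rewrite /= in_itv /= => /andP [_ xB].
  rewrite /f; have := cpos x Ax; have := ler_wpM2l y0 xB; lra.
pose s := sup S.
have [p Kp sp] : exists2 p, K p & s <= f p.
  apply: contrapT => N.
  have H : forall p, K p -> f p < s.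
    move=> p Kp; rewrite ltNge; apply/negP => h; apply: N; by exists p.
  pose F := filter_from [set e : R | 0 < e] (fun e => [set x | K x /\ s - e < f x]).
  have FF : Filter F.
    apply: filter_from_filter; first by exists 1; rewrite /= ltr01.
    move=> i j i0 j0; exists (Num.min i j); first by rewrite /= lt_min i0 j0.
    move=> x [Kx lx]; split; split => //.
      have : Num.min i j <= i by rewrite ge_min lexx.
      lra.
    have : Num.min i j <= j by rewrite ge_min lexx orbT.
    lra.
  have PF : ProperFilter F.
    apply: filter_from_proper => e e0.
    have [_ [x Kx <-] lx] := sup_adherent e0 hS.
    by exists x.
  have FK : F K by exists 1 => //= x [].
  have [q [Kq clq]] := cK F PF FK.
  have Aq : A q by case: Kq.
  pose eta := (s - f q) / 2.
  have eta0 : 0 < eta by rewrite /eta divr_gt0 // subr_gt0; apply: H.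
  have Fe : F [set x | K x /\ s - eta < f x] by exists eta.
  have NV : nbhs q [set z | A z -> f z < f q + eta].
    have H1 : \forall t \near within A q^'-, c q - eta < c t.
      by apply: (cvgr_gt (c q)); [exact: lc | rewrite ltrBlDr ltrDl].
    rewrite near_withinE /at_left near_withinE in H1.
    pose d := eta / (y + 1).
    have d0 : 0 < d by rewrite divr_gt0 //; lra.
    have hd : d * (y + 1) = eta by rewrite /d mulrC mulrCA mulrV ?mulr1 // unitfE; lra.
    have H2 := nbhsx_ballx q d d0.
    near=> z => Az.
    have bz : ball q d z by near: z.
    move: bz; rewrite -ball_normE /= => bz.
    rewrite /f.
    case: (ltP z q) => zq.
      have h1 : c q - eta < c z by move: zq Az; near: z; exact: H1.
      have := ler_wpM2l y0 (ltW zq); lra.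
    have h1 := mon _ _ Aq Az zq.
    have h2 : z - q <= d.
      by apply: le_trans (ltW bz); rewrite distrC ler_norm.
    have := ler_wpM2l y0 h2; rewrite mulrBr; have : y * d = eta - d.
      by rewrite -hd; ring.
    lra.
  have [z [[Kz lz] Vz]] := clq _ _ Fe NV.
  have : f z < f q + eta by apply: Vz; case: Kz.
  move: lz; rewrite /eta; lra.
have Ap : A p by case: Kp.
exists p => // x Ax.
have fs : f x <= s.
  case: (leP x B') => xB.
    apply: sup_upper_bound => //; exists x => //; split => //=.
    by rewrite in_itv /= xB andbT; apply: thm.
  have xB2 : B < x by apply: le_lt_trans xB; rewrite le_max lexx.
  have := HB x Ax xB2 => h.
  apply: le_trans (ltW h) _; apply: sup_upper_bound => //; exists th => //.
  by rewrite /f c0 subr0.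
exact: le_trans fs sp.
Unshelve. all: by end_near.
Qed.

Lemma bound_B (A : set R) (c : R -> R) th (y0 : R) :
  (forall x, A x -> th <= x) -> (forall x, A x -> 0 <= c x) ->
  (~ has_ubound A ->
     (ereal_inf [set (c x / x)%:E | x in [set x | A x /\ y <= x]])
        @[y --> +oo] --> +oo%E) -> 0 <= y0 ->
  exists B, forall y, 0 <= y -> y <= y0 -> forall x, A x -> B < x -> y * x - c x < y * th.
Proof.
move=> thm cpos G y00.
case: (pselect (has_ubound A)) => [[M ubM]|nub].
  by exists M => y _ _ x Ax; rewrite ltNge ubM.
have := proj1 (cvgeyPge _) (G nub) (y0 + 1).
move=> [Y [_ HY]].
pose Y1 := Num.max Y 0 + 1.
have Y1Y : Y < Y1 by rewrite /Y1; have := le_max Y Y 0; rewrite lexx /=; lra.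
have Y10 : 0 < Y1 by rewrite /Y1; have := le_max 0 Y 0; rewrite lexx orbT /=; lra.
have HY1 := HY Y1 Y1Y.
exists (Num.max Y1 (y0 * `|th| + 1)) => y y0' yy0 x Ax.
rewrite gt_max => /andP [xY1 xth].
have x0 : 0 < x by lra.
have hcx : (y0 + 1) <= c x / x.
  rewrite -lee_fin; apply: le_trans HY1 _; apply: ereal_inf_lbound.
  by exists x => //; split => //; apply: ltW.
have hcx2 : (y0 + 1) * x <= c x by rewrite -ler_pdivlMr.
have h1 : y * x <= y0 * x by rewrite ler_wpM2r // ltW.
have h2 : - (y0 * `|th|) <= y * th.
  have : y * `|th| <= y0 * `|th| by rewrite ler_wpM2r.
  have : - `|th| <= th by rewrite -lerNl ler_normr lexx orbT.
  move=> h; have := ler_wpM2l y0' h; rewrite mulrN; lra.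
lra.
Qed.

Lemma phi_max (A : set R) (c : R -> R) y p : A p ->
  (forall x, A x -> y * x - c x <= y * p - c p) -> phi A c y = y * p - c p.
Proof.
move=> Ap H; rewrite /phi; apply/le_anti/andP; split.
  apply: ge_sup; first by exists (y * p - c p), p.
  by move=> _ [x Ax <-]; apply: H.
apply: sup_upper_bound; last by exists p.
split; first by exists (y * p - c p), p.
by exists (y * p - c p) => _ [x Ax <-]; apply: H.
Qed.

Lemma psi_le (A : set R) (c : R -> R) th y p : (forall x, A x -> th <= x) -> A p ->
  (forall x, A x -> y * x - c x <= y * p - c p) -> psi A c y <= p.
Proof.
move=> thm Ap H; rewrite /psi; apply: ge_inf.
  by exists th => x [Ax _]; apply: thm.
by split => //; rewrite (phi_max Ap H).
Qed.

Lemma psi_ge (A : set R) (c : R -> R) y p L : A p ->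
  (forall x, A x -> y * x - c x <= y * p - c p) ->
  (forall q, A q -> (forall x, A x -> y * x - c x <= y * q - c q) -> L <= q) ->
  L <= psi A c y.
Proof.
move=> Ap H HL; rewrite /psi; apply: lb_le_inf.
  by exists p; split => //; rewrite (phi_max Ap H).
move=> q [Aq e]; apply: HL => // x Ax; rewrite e (phi_max Ap H); exact: H.
Qed.
End S.
Unset Implicit Arguments.

Theorem proposition2 (R : realType) (A : set R) (c : R -> R) (theta_s : R) :
  closed A ->
  A theta_s -> (forall x, A x -> theta_s <= x) ->
  (forall x y, A x -> A y -> x <= y -> c x <= c y) ->
  (forall x, A x -> c z @[z --> within A (x^'-)] --> c x) ->
  c theta_s = 0 ->
  (forall x, A x -> theta_s < x -> 0 < c x) ->
  (~ has_ubound A ->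
     (ereal_inf [set (c x / x)%:E | x in [set x | A x /\ y <= x]])
        @[y --> +oo] --> +oo%E) ->
  [/\ psi A c y @[y --> 0^'+] --> psi A c 0,
      (phi_star A c < +oo)%E <-> (exists x, A x /\ 0 <= x),
      ~ has_ubound A ->
        psi A c y @[y --> +oo] --> +oo /\ phi A c y @[y --> +oo] --> +oo &
      has_ubound A -> psi A c y @[y --> +oo] --> sup A].
Proof.
move=> cA Ath thm mon lc c0 cpos' G.
have cpos := c_ge0 Ath thm mon c0.
have EM : forall y, 0 <= y -> exists2 p, A p & forall x, A x -> y * x - c x <= y * p - c p.
  move=> y y0; have [B HB] := bound_B thm cpos G y0.
  apply: (exists_max (B := B) cA Ath thm mon lc c0 y0).
  by move=> x Ax; apply: (HB y y0 (lexx y) x Ax).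
have psi0 : psi A c 0 = theta_s.
  apply/le_anti/andP; split.
    apply: (psi_le thm Ath) => x Ax; rewrite !mul0r c0 !sub0r lerN2; exact: cpos.
  have [p Ap Hp] := EM 0 (lexx _).
  by apply: (psi_ge Ap Hp) => q Aq _; apply: thm.
split.
- rewrite psi0; apply/cvgrPdist_lt => e e0.
  have [d d0 Hd] : exists2 d : R, 0 < d & forall y q, 0 < y -> y < d -> A q ->
      (forall x, A x -> y * x - c x <= y * q - c q) -> q < theta_s + e.
    case: (pselect (exists x, A x /\ theta_s + e <= x)) => [Cne | Ce]; last first.
      exists 1 => // y q _ _ Aq _; rewrite ltNge; apply/negP => h; apply: Ce; by exists q.
    have [B1 HB1] := bound_B thm cpos G (@ler01 R).
    pose C := A `&` `[theta_s + e, +oo[.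
    have cC : closed C by apply: closedI cA (@rray_closed _ _ _).
    have C0 : C !=set0.
      by case: Cne => x [Ax xe]; exists x; split => //=; rewrite in_itv /= xe.
    have lC : has_lbound C.
      by exists (theta_s + e) => x [_]; rewrite /= in_itv /= andbT.
    have Ca := closed_inf_in cC C0 lC.
    case: (Ca) => Aa; rewrite /= in_itv /= andbT => ae.
    have ca0 : 0 < c (inf C) by apply: cpos' => //; lra.
    pose k := `|B1 - theta_s| + 1.
    have k0 : 0 < k by rewrite /k; have := normr_ge0 (B1 - theta_s); lra.
    exists (Num.min 1 (c (inf C) / k)).
      by rewrite lt_min ltr01 divr_gt0.
    move=> y q y0; rewrite lt_min => /andP [y1 yk] Aq Hq.
    have qB : q <= B1.
      rewrite leNgt; apply/negP => h.
      have := HB1 y (ltW y0) (ltW y1) q Aq h; have := Hq _ Ath; lra.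
    have h1 := Hq _ Ath; rewrite c0 in h1.
    have h2 : y * (q - theta_s) <= y * `|B1 - theta_s|.
      apply: ler_wpM2l; first exact: ltW.
      apply: le_trans (ler_norm _); lra.
    have h3 : y * k < c (inf C) by rewrite -ltr_pdivlMr.
    rewrite ltNge; apply/negP => h.
    have Cq : C q by split => //=; rewrite in_itv /= h.
    have := mon _ _ Aa Aq (ge_inf lC Cq).
    have h3' : y * `|B1 - theta_s| + y < c (inf C) by move: h3; rewrite /k mulrDr mulr1.
    rewrite mulrBr in h2; lra.
  near=> y.
  have y0 : 0 < y by near: y; exact: nbhs_right_gt.
  have yd : y < d by near: y; exact: nbhs_right_lt.
  have [q Aq Hq] := EM y (ltW y0).
  have hq := Hd y q y0 yd Aq Hq.
  have h1 := psi_le thm Aq Hq.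
  have h2 : theta_s <= psi A c y by apply: (psi_ge Aq Hq) => r Ar _; apply: thm.
  rewrite distrC ger0_norm ?subr_ge0 //; lra.
- split.
    rewrite /phi_star => hlt; apply: contrapT => N.
    have neg : forall x, A x -> x < 0.
      move=> x Ax; rewrite ltNge; apply/negP => h; apply: N; by exists x.
    have ubA : has_ubound A by exists 0 => x Ax; apply: ltW; apply: neg.
    have sA := closed_sup_in cA (ex_intro _ _ Ath) ubA.
    have sA0 := neg _ sA.
    have hsA : has_sup A by split => //; exists theta_s.
    have phiub : forall y, 0 <= y -> phi A c y <= y * sup A.
      move=> y y0; have [p Ap Hp] := EM y y0; rewrite (phi_max Ap Hp).
      have := cpos p Ap; have := ler_wpM2l y0 (sup_upper_bound hsA Ap); lra.
    have phi0 : phi A c 0 <= 0 by have := phiub 0 (lexx _); rewrite mul0r.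
    move: hlt; case E : (ereal_inf _) => [r||] //= _.
      pose y := (`|r| + 1) / (- sup A).
      have y0 : 0 < y by have := normr_ge0 r; rewrite /y => ?; apply: divr_gt0; lra.
      have ysA : y * sup A = - (`|r| + 1).
        rewrite /y; field; lra.
      have := phiub y (ltW y0); rewrite ysA.
      have : (r%:E <= (phi A c y)%:E)%E.
        by rewrite -E; apply: ereal_inf_lbound; exists y => //; apply: ltW.
      rewrite lee_fin; have := lerNnormlW (lexx `|r|); lra.
    have : (+oo <= (phi A c 0)%:E)%E.
      by rewrite -E; apply: ereal_inf_lbound; exists 0 => //=.
    by rewrite leNgt ltry.
  move=> [x0 [Ax0 x00]]; rewrite /phi_star.
  apply: (@le_lt_trans _ _ (c x0)%:E); last exact: ltry.
  rewrite leeNl; apply/ereal_infP => _ [y /= y0 <-].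
  rewrite lee_fin; have [p Ap Hp] := EM y y0; rewrite (phi_max Ap Hp).
  have := Hp x0 Ax0; have := mulr_ge0 y0 x00; lra.
- move=> nub.
  have big : forall M, exists2 x, A x & M < x.
    move=> M; apply: contrapT => N; apply: nub; exists M => x Ax.
    rewrite leNgt; apply/negP => h; apply: N; by exists x.
  split.
    apply/cvgryPge => M.
    have [x1 Ax1 x1M] := big (Num.max M 0).
    have x1M' : M < x1 by apply: le_lt_trans x1M; rewrite le_max lexx.
    pose r := Num.max 0 (c x1 / (x1 - M)).
    near=> y.
    have yr : r < y by near: y; apply: nbhs_pinfty_gt; exact: num_real.
    have y0 : 0 < y by apply: le_lt_trans yr; rewrite le_max lexx.
    have hy : c x1 < y * (x1 - M).
      rewrite -ltr_pdivrMr ?subr_gt0 //; apply: le_lt_trans yr.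
      by rewrite le_max lexx orbT.
    have [p Ap Hp] := EM y (ltW y0).
    apply: (psi_ge Ap Hp) => q Aq Hq.
    rewrite leNgt; apply/negP => qM.
    rewrite mulrBr in hy.
    have := Hq x1 Ax1; have := cpos q Aq; have := ler_wpM2l (ltW y0) (ltW qM); lra.
  apply/cvgryPge => M.
  have [x1 Ax1 x10] := big 0.
  pose r := Num.max 0 ((`|M| + c x1) / x1).
  near=> y.
  have yr : r < y by near: y; apply: nbhs_pinfty_gt; exact: num_real.
  have y0 : 0 < y by apply: le_lt_trans yr; rewrite le_max lexx.
  have hy : `|M| + c x1 < y * x1.
    rewrite -ltr_pdivrMr //; apply: le_lt_trans yr.
    by rewrite le_max lexx orbT.
  have [p Ap Hp] := EM y (ltW y0).
  rewrite (phi_max Ap Hp).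
  have := Hp x1 Ax1; have := ler_norm M; lra.
- move=> ubA.
  have hsA : has_sup A by split => //; exists theta_s.
  have sA := closed_sup_in cA (ex_intro _ _ Ath) ubA.
  apply/cvgrPdist_lt => e e0.
  pose r := Num.max 0 (c (sup A) / (e / 2)).
  near=> y.
  have yr : r < y by near: y; apply: nbhs_pinfty_gt; exact: num_real.
  have y0 : 0 < y by apply: le_lt_trans yr; rewrite le_max lexx.
  have e2 : 0 < e / 2 by rewrite divr_gt0.
  have hy : c (sup A) < y * (e / 2).
    rewrite -ltr_pdivrMr //; apply: le_lt_trans yr.
    by rewrite le_max lexx orbT.
  have [p Ap Hp] := EM y (ltW y0).
  have h1 := psi_le thm Ap Hp.
  have h1' := sup_upper_bound hsA Ap.
  have h2 : sup A - e / 2 <= psi A c y.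
    apply: (psi_ge Ap Hp) => q Aq Hq.
    rewrite leNgt; apply/negP => qM.
    have := Hq _ sA; have := cpos q Aq; have := ler_wpM2l (ltW y0) (ltW qM).
    rewrite mulrBr; lra.
  rewrite ger0_norm; first lra.
  rewrite subr_ge0; lra.
Unshelve. all: by end_near.
Qed.
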